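(* Let $\{x^k\}$ be generated by Algorithm IRG with the backtracking stepsize rule and $\theta<\mu$, and assume $\rho_k\to0$. Assume $\{x^k\}$ has an accumulation point $\bar x$, $f$ satisfies the KL property at $\bar x$ with $\psi(t)=Mt^q$ for some $M>0$ and $q\in(0,1)$, and $\nabla f$ is Lipschitz continuous on a neighborhood of $\bar x$. Assume $\mathbb N\setminus\mathcal N$ is infinite, enumerate it increasingly as $j_1<j_2<\cdots$, and set $z^k:=x^{j_k}$. Then: (i) if $q\in(0,1/2]$, $\{z^k\}$ converges linearly to $\bar x$, i.e. there exist $C>0$ and $\lambda\in(0,1)$ with $\|z^k-\bar x\|\le C\lambda^k$ for all large $k$; (ii) if $q\in(1/2,1)$, there exists $\varrho>0$ with $\|z^k-\bar x\|\le\varrho k^{-\frac{1-q}{2q-1}}$ for all sufficiently large $k$.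
   Context: Algorithm IRG (general inexact reduced gradient framework). Let $f:\mathbb R^n\to\mathbb R$ be continuously differentiable. Parameters: initial point $x^1\in\mathbb R^n$, initial radii $\varepsilon_1>0$, $r_1>0$, reduction factors $\mu,\theta\in(0,1)$, and a sequence $\{\rho_k\}$ of positive numbers. For $k=1,2,\dots$: (1) choose $g^k\in\mathbb R^n$ with $\|g^k-\nabla f(x^k)\|\le\min\{\varepsilon_k,\rho_k\}$; (2) if $\|g^k\|\le r_k+\varepsilon_k$, set $r_{k+1}=\mu r_k$, $\varepsilon_{k+1}=\theta\varepsilon_k$, $d^k=0$; otherwise set $r_{k+1}=r_k$, $\varepsilon_{k+1}=\varepsilon_k$ and $d^k=-\frac{\|g^k\|-\varepsilon_k}{\|g^k\|}g^k$; (3) choose a stepsize $t_k>0$ by some rule; (4) set $x^{k+1}=x^k+t_kd^k$. The set of null iterations is $\mathcal N:=\{k\in\mathbb N: x^{k+1}=x^k\}$. Backtracking stepsize rule: fix $\beta,\gamma,\tau\in(0,1)$; if $d^k=0$ set $t_k=\tau$; otherwise $t_k=\max\{t\in\{1,\gamma,\gamma^2,\dots\}: f(x^k+td^k)\le f(x^k)-\beta t\|d^k\|^2\}$. KL property with $\psi(t)=Mt^q$: there exist $\eta>0$ and a neighborhood $U$ of $\bar x$ such that $\|\nabla f(x)\|\ge M(f(x)-f(\bar x))^q$ for all $x\in U$ with $f(\bar x)<f(x)<f(\bar x)+\eta$. *)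

(* Defs.v *)
From HB Require Import structures.
From mathcomp Require Import all_boot all_order all_algebra.
From mathcomp Require Import all_classical all_reals all_analysis.
Set Implicit Arguments. Unset Strict Implicit. Unset Printing Implicit Defensive.
Import Order.TTheory GRing.Theory Num.Theory.
Import numFieldNormedType.Exports.
Local Open Scope ring_scope.
Local Open Scope classical_set_scope.

Definition dotv {R : realType} {n : nat} (u v : 'rV[R]_n) : R :=
  \sum_(i < n) u ord0 i * v ord0 i.
Definition enorm {R : realType} {n : nat} (v : 'rV[R]_n) : R :=
  Num.sqrt (dotv v v).

Definition C1_with_gradient {R : realType} {n : nat}
  (f : 'rV[R]_n -> R) (gf : 'rV[R]_n -> 'rV[R]_n) : Prop :=
  (forall x, differentiable f x /\ forall h, 'd f x h = dotv (gf x) h)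
  /\ continuous gf.

(* Algorithm IRG with the backtracking stepsize rule; iterations indexed by
   k = 1, 2, ...  (values of the sequences at index 0 are irrelevant). *)
Definition IRG_backtracking {R : realType} {n : nat}
  (f : 'rV[R]_n -> R) (gf : 'rV[R]_n -> 'rV[R]_n)
  (mu theta beta gamma tau : R) (rho : nat -> R)
  (x g d : nat -> 'rV[R]_n) (eps r t : nat -> R) : Prop :=
  [/\ (0 < eps 1%N) && (0 < r 1%N),
      (0 < mu < 1) && (0 < theta < 1),
      [&& 0 < beta < 1, 0 < gamma < 1 & 0 < tau < 1],
      (forall k, (1 <= k)%N -> 0 < rho k) &
      forall k, (1 <= k)%N ->
        [/\ enorm (g k - gf (x k)) <= Num.min (eps k) (rho k),
            (if enorm (g k) <= r k + eps k then
               [/\ r k.+1 = mu * r k, eps k.+1 = theta * eps k,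
                   d k = 0 & t k = tau]
             else
               [/\ r k.+1 = r k, eps k.+1 = eps k,
                   d k = - ((enorm (g k) - eps k) / enorm (g k)) *: g k &
                   (* t k = max { t in {1, gamma, gamma^2, ...} :
                        f (x k + t d k) <= f (x k) - beta t ||d k||^2 } *)
                   exists i : nat,
                     [/\ t k = gamma ^+ i,
                         f (x k + t k *: d k) <= f (x k) - beta * t k * enorm (d k) ^+ 2 &
                         forall i', (i' < i)%N ->
                           ~ (f (x k + gamma ^+ i' *: d k)
                                <= f (x k) - beta * gamma ^+ i' * enorm (d k) ^+ 2)]])
          & x k.+1 = x k + t k *: d k]].

(* Main.v *)
Require Import Defs.
From HB Require Import structures.
From mathcomp Require Import all_boot all_order all_algebra.
From mathcomp Require Import all_classical all_reals all_analysis.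
From mathcomp Require Import ring lra zify.
Import Order.TTheory GRing.Theory Num.Theory.
Import numFieldNormedType.Exports.
Local Open Scope ring_scope.
Local Open Scope classical_set_scope.

Section Main.
Variables (R : realType) (n : nat).

Implicit Types u v w : 'rV[R]_n.

Lemma dotvC u v : dotv u v = dotv v u.
Proof. by apply: eq_bigr => i _; rewrite mulrC. Qed.

Lemma dotvDl u v w : dotv (u + v) w = dotv u w + dotv v w.
Proof. by rewrite /dotv -big_split; apply: eq_bigr => i _; rewrite !mxE mulrDl. Qed.

Lemma dotvZl a u w : dotv (a *: u) w = a * dotv u w.
Proof. by rewrite /dotv mulr_sumr; apply: eq_bigr => i _; rewrite !mxE mulrA. Qed.

Lemma dotvNl u w : dotv (- u) w = - dotv u w.
Proof. by rewrite -scaleN1r dotvZl mulN1r. Qed.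

Lemma dotvBl u v w : dotv (u - v) w = dotv u w - dotv v w.
Proof. by rewrite dotvDl dotvNl. Qed.

Lemma dotvDr u v w : dotv w (u + v) = dotv w u + dotv w v.
Proof. by rewrite !(dotvC w) dotvDl. Qed.

Lemma dotvZr a u w : dotv w (a *: u) = a * dotv w u.
Proof. by rewrite !(dotvC w) dotvZl. Qed.

Lemma dotvBr u v w : dotv w (u - v) = dotv w u - dotv w v.
Proof. by rewrite !(dotvC w) dotvBl. Qed.

Lemma dotv_ge0 u : 0 <= dotv u u.
Proof. by apply: sumr_ge0 => i _; rewrite -expr2 sqr_ge0. Qed.

Lemma dotv0l u : dotv 0 u = 0.
Proof. by rewrite /dotv big1 // => i _; rewrite mxE mul0r. Qed.

Lemma dotv_eq0 u : dotv u u = 0 -> u = 0.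
Proof.
move=> /eqP; rewrite psumr_eq0 => [/allP H|i _]; last by rewrite -expr2 sqr_ge0.
apply/rowP => i; rewrite mxE; apply/eqP.
by have := H i (mem_index_enum _); rewrite -expr2 sqrf_eq0.
Qed.

Lemma enorm_ge0 u : 0 <= enorm u.
Proof. exact: sqrtr_ge0. Qed.

Lemma enorm_sq u : enorm u ^+ 2 = dotv u u.
Proof. by rewrite /enorm sqr_sqrtr // dotv_ge0. Qed.

Lemma enorm0 : enorm (0 : 'rV[R]_n) = 0.
Proof. by rewrite /enorm dotv0l sqrtr0. Qed.

Lemma enorm_eq0 u : enorm u = 0 -> u = 0.
Proof. by move=> H; apply: dotv_eq0; rewrite -enorm_sq H expr0n. Qed.

Lemma enorm_gt0 u : u != 0 -> 0 < enorm u.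
Proof.
move=> u0; rewrite lt_def enorm_ge0 andbT; apply/eqP => /(enorm_eq0 _) H.
by rewrite H eqxx in u0.
Qed.

Lemma enormZ a u : enorm (a *: u) = `|a| * enorm u.
Proof.
by rewrite /enorm dotvZl dotvZr mulrA -expr2 sqrtrM ?sqr_ge0 // sqrtr_sqr.
Qed.

Lemma enormN u : enorm (- u) = enorm u.
Proof. by rewrite -scaleN1r enormZ normrN normr1 mul1r. Qed.

Lemma CS u v : dotv u v <= enorm u * enorm v.
Proof.
set a := enorm u; set b := enorm v.
have [a0|] := eqVneq a 0.
  by rewrite (enorm_eq0 _ a0) dotv0l a0 mul0r.
have [b0|] := eqVneq b 0.
  by rewrite (enorm_eq0 _ b0) dotvC dotv0l b0 mulr0.
move=> bn0 an0.
have ha : 0 < a by rewrite lt_def an0 enorm_ge0.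
have hb : 0 < b by rewrite lt_def bn0 enorm_ge0.
have := dotv_ge0 (b *: u - a *: v).
rewrite dotvBl !dotvBr !dotvZl !dotvZr -!enorm_sq -/a -/b (dotvC v u) => H.
have H2 : a * b * dotv u v <= a * b * (a * b) by nra.
by rewrite -(ler_pM2l (mulr_gt0 ha hb)).
Qed.

Lemma enormD u v : enorm (u + v) <= enorm u + enorm v.
Proof.
rewrite -(ler_pXn2r (n:=2)) // ?nnegrE ?addr_ge0 ?enorm_ge0 //.
rewrite enorm_sq dotvDl !dotvDr -!enorm_sq (dotvC v u).
have := CS u v; nra.
Qed.

Lemma enormB u v : enorm (u - v) <= enorm u + enorm v.
Proof. by rewrite -(enormN v) enormD. Qed.

Lemma enormBC u v : enorm (u - v) = enorm (v - u).
Proof. by rewrite -enormN opprB. Qed.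

Lemma coord_le_enorm u i : `|u ord0 i| <= enorm u.
Proof.
rewrite -(ler_pXn2r (n:=2)) // ?nnegrE ?enorm_ge0 // enorm_sq real_normK ?num_real //.
rewrite /dotv (bigD1 i) //= expr2 lerDl; apply: sumr_ge0 => k _; rewrite -expr2 sqr_ge0.
by [].
Qed.

Lemma norm_le_enorm u : `|u| <= enorm u.
Proof.
rewrite /Num.Def.normr /= mx_normrE; apply: bigmax_le => [|[i k] _]; first exact: enorm_ge0.
by rewrite /= (ord1 i) coord_le_enorm.
Qed.



Lemma nbhs_enorm (x : 'rV[R]_n) (U : set 'rV[R]_n) : nbhs x U ->
  exists2 e : R, 0 < e & forall y, enorm (y - x) < e -> U y.
Proof.
move=> /nbhs_ballP [e e0 H]; exists e => // y hy; apply: H.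
rewrite -ball_normE /ball_ /=.
by apply: le_lt_trans hy; rewrite -enormN opprB norm_le_enorm.
Qed.

Lemma cont_enorm (f : 'rV[R]_n -> R) x : {for x, continuous f} ->
  forall e : R, 0 < e -> exists2 dl : R, 0 < dl &
    forall y, enorm (y - x) < dl -> `|f x - f y| < e.
Proof.
move=> /cvgrPdist_lt H e e0; have := H e e0.
by move=> /nbhs_enorm [dl dl0 Hd]; exists dl.
Qed.

Lemma dir_derive (f : 'rV[R]_n -> R) (gf : 'rV[R]_n -> 'rV[R]_n)
  (Hd : forall x, differentiable f x /\ forall h, 'd f x h = dotv (gf x) h)
  x d (u : R) :
  is_derive u 1 (fun s => f (x + s *: d)) (dotv (gf (x + u *: d)) d).
Proof.
have E : (fun h : R => h^-1 *: (((fun s => f (x + s *: d)) \o shift u) (h *: 1)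
              - f (x + u *: d))) =
         (fun h : R => h^-1 *: ((f \o shift (x + u *: d)) (h *: d) - f (x + u *: d))).
  apply: funext => h /=; congr (_ *: (f _ - _)).
  by rewrite scalerDl [h *: 1]mulr1 addrCA addrA.
have Hdv : derivable (fun s : R => f (x + s *: d)) u 1.
  rewrite /derivable E; exact: diff_derivable (proj1 (Hd _)).
split => //.
rewrite /derive E -/(derive f (x + u *: d) d) deriveE; last exact: (proj1 (Hd _)).
by rewrite (proj2 (Hd _)).
Qed.

Lemma descent (f : 'rV[R]_n -> R) (gf : 'rV[R]_n -> 'rV[R]_n)
  (Hd : forall x, differentiable f x /\ forall h, 'd f x h = dotv (gf x) h)
  x d (s L : R) : 0 <= s -> 0 <= L ->
  (forall u : R, 0 <= u <= s -> enorm (gf (x + u *: d) - gf x) <= L * (u * enorm d)) ->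
  f (x + s *: d) <= f x + s * dotv (gf x) d + L * s ^+ 2 * enorm d ^+ 2.
Proof.
move=> s0 L0 HL.
have cg : continuous (fun s : R => f (x + s *: d)).
  move=> u; apply: differentiable_continuous; apply/derivable1_diffP.
  by have [] := dir_derive f gf Hd x d u.
have MV := @MVT_segment R (fun s : R => f (x + s *: d)) (fun u : R => dotv (gf (x + u *: d)) d) 0 s s0.
have [c] : exists2 c, c \in `[0, s]%R & (f (x + s *: d) - f (x + 0 *: d)) = dotv (gf (x + c *: d)) d * (s - 0).
  apply: MV; last exact: continuous_subspaceT.
  move=> u _; exact: dir_derive.
rewrite in_itv /= => /andP [c0 cs].
rewrite scale0r addr0 subr0 => E.
have -> : f (x + s *: d) = f x + dotv (gf (x + c *: d)) d * s by rewrite -E addrC subrKC.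
have H1 : dotv (gf (x + c *: d)) d = dotv (gf x) d + dotv (gf (x + c *: d) - gf x) d.
  by rewrite dotvBl addrC subrKC.
have H2 := CS (gf (x + c *: d) - gf x) d.
have H3 := HL c (introT andP (conj c0 cs)).
have en0 := enorm_ge0 d.
have H4 : dotv (gf (x + c *: d) - gf x) d <= L * s * enorm d ^+ 2.
  apply: (le_trans H2); apply: (le_trans (ler_wpM2r en0 H3)).
  have := mulr_ge0 (mulr_ge0 L0 ((eqbRL (subr_ge0 _ _) cs))) (mulr_ge0 en0 en0).
  nra.
rewrite H1; have := ler_wpM2r s0 H4; nra.
Qed.


Lemma amgm (al u : R) : 0 < al < 1 -> 0 <= u -> u `^ al <= al * u + (1 - al).
Proof.
move=> /andP[a0 a1] u0.
have p0 : 0 < al^-1 by rewrite invr_gt0.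
have q0 : 0 < (1 - al)^-1 by rewrite invr_gt0 subr_gt0.
have := @conjugate_powR R (u `^ al) 1 (al^-1) ((1 - al)^-1) (powR_ge0 _ _) ler01 p0 q0.
move=> H.
have := H (eq_trans (f_equal2 +%R (invrK al) (invrK (1 - al))) (subrKC al 1)).
rewrite mulr1 -powRrM mulfV ?gt_eqF // powRr1 // powR1.
move=> H2; apply: (le_trans H2).
have e1 : u / al^-1 = al * u by rewrite mulrC; field; rewrite gt_eqF.
have e2 : 1 / (1 - al)^-1 = 1 - al by field; rewrite subr_eq0 gt_eqF.
by rewrite e1 e2.
Qed.

Lemma pow_concave (al a b : R) : 0 < al < 1 -> 0 < a -> 0 <= b ->
  al * a `^ (al - 1) * (a - b) <= a `^ al - b `^ al.
Proof.
move=> ha a0 b0.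
have /andP[al0 al1] := ha.
set u := b / a.
have u0 : 0 <= u by rewrite divr_ge0 // ltW.
have hb : b = a * u by rewrite /u mulrC divfK ?gt_eqF.
have E1 : a `^ (al - 1) * a = a `^ al by rewrite mulrC mulr_powRB1 // ltW.
have := amgm _ _ ha u0.
have apos : 0 < a `^ al by rewrite powR_gt0.
rewrite hb powRM ?(ltW a0) // => H.
have H2 : a `^ al * u `^ al <= a `^ al * (al * u + (1 - al)) by rewrite ler_pM2l.
have -> : al * a `^ (al - 1) * (a - a * u) = al * a `^ al * (1 - u).
  by rewrite -E1; ring.
nra.
Qed.

Lemma pow_convex (p a b : R) : 0 < p -> 0 < a -> 0 < b ->
  a `^ (- p) + p * a `^ (- p - 1) * (a - b) <= b `^ (- p).
Proof.
move=> p0 a0 b0.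
set u := b / a.
have u0 : 0 < u by rewrite divr_gt0.
have hb : b = a * u by rewrite /u mulrC divfK ?gt_eqF.
have E1 : a `^ (- p - 1) * a = a `^ (- p).
  rewrite -{2}(powRr1 (ltW a0)) -powRD ?subrK //.
  by apply/implyP => _; rewrite gt_eqF.
have Hu : 1 - p * (u - 1) <= u `^ (- p).
  rewrite /powR gt_eqF //.
  apply: le_trans (expR_ge1Dx _).
  have : ln u <= u - 1.
    have := @le_ln1Dx R (u - 1); rewrite subrKC; apply.
    lra.
  nra.
have apos : 0 < a `^ (- p) by rewrite powR_gt0.
rewrite hb powRM ?(ltW a0) ?(ltW u0) //.
have -> : p * a `^ (- p - 1) * (a - a * u) = - p * a `^ (- p) * (u - 1).
  by rewrite -E1; ring.
have := ler_pM2l apos; move=> /(_ _ _) H.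
have := (ler_wpM2l (ltW apos) Hu); nra.
Qed.
End Main.
Arguments dotvC {R n}. Arguments dotvDl {R n}. Arguments dotvZl {R n}. Arguments dotvNl {R n}.
Arguments dotvBl {R n}. Arguments dotvDr {R n}. Arguments dotvZr {R n}. Arguments dotvBr {R n}.
Arguments dotv_ge0 {R n}. Arguments dotv0l {R n}. Arguments dotv_eq0 {R n}.
Arguments enorm_ge0 {R n}. Arguments enorm_sq {R n}. Arguments enorm0 {R n}.
Arguments enorm_eq0 {R n}. Arguments enorm_gt0 {R n}. Arguments enormZ {R n}.
Arguments enormN {R n}. Arguments CS {R n}. Arguments enormD {R n}. Arguments enormB {R n}.
Arguments enormBC {R n}. Arguments coord_le_enorm {R n}. Arguments norm_le_enorm {R n}.
Arguments nbhs_enorm {R n}. Arguments cont_enorm {R n}. Arguments dir_derive {R n}.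
Arguments descent {R n}. Arguments amgm {R}. Arguments pow_concave {R}. Arguments pow_convex {R}.

Lemma ind1 (P : nat -> Prop) : P 1%N -> (forall k, (1 <= k)%N -> P k -> P k.+1) ->
  forall k, (1 <= k)%N -> P k.
Proof.
move=> P1 PS; elim=> [//|k IH]; case: k IH => [_ _|k IH _]; first exact: P1.
by apply: PS => //; apply: IH.
Qed.

Lemma indN (P : nat -> Prop) N : P N -> (forall k, (N <= k)%N -> P k -> P k.+1) ->
  forall k, (N <= k)%N -> P k.
Proof.
move=> PN PS k; elim: k => [|k IH]; first by rewrite leqn0 => /eqP <-.
rewrite leq_eqVlt => /orP [/eqP <- //|hk]; apply: PS => //; exact: IH.
Qed.



Lemma near_oo (P : nat -> Prop) N : (forall k, (N <= k)%N -> P k) -> \forall k \near \oo, P k.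
Proof. by move=> H; exists N => // k /= hk; apply: H. Qed.

Lemma powR_antiN (R : realType) (s u v : R) : 0 < s -> 0 < u -> u <= v ->
  v `^ (- s) <= u `^ (- s).
Proof.
move=> s0 u0 uv; rewrite !powRN.
have h : u `^ s <= v `^ s.
  have := ge0_ler_powR (ltW s0) (_ : u \in Num.nneg) (_ : v \in Num.nneg) uv.
  by rewrite !nnegrE; apply; rewrite ltW //; apply: lt_le_trans uv.
by rewrite lef_pV2 ?posrE ?powR_gt0 //; apply: lt_le_trans uv.
Qed.

Lemma rate_lin (R : realType) (E : nat -> R) (c2 q : R) (N : nat) :
  0 < c2 -> 0 < q -> q <= 1/2 ->
  (forall k, (N <= k)%N -> [/\ 0 < E k, E k < 1 & E k.+1 <= E k - c2 * E k `^ (2 * q)]) ->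
  exists C lam : R, 0 < C /\ 0 < lam < 1 /\
    forall k, (N <= k)%N -> E k `^ (1 - q) <= C * lam ^+ k.
Proof.
move=> c0 q0 qh H.
set a := 1 - c2.
have Hr : forall k, (N <= k)%N -> E k.+1 <= a * E k.
  move=> k hk; have [e0 e1 er] := H k hk.
  have : E k <= E k `^ (2 * q).
    by apply: ger1_powR; [rewrite e0 ltW | lra].
  have := ltW c0; rewrite /a; nra.
have [eN0 _ _] := H N (leqnn N).
have [eN10 _ _] := H N.+1 (leqnSn N).
have a0 : 0 < a.
  have := Hr N (leqnn N); move=> h.
  have : 0 < a * E N by apply: lt_le_trans eN10 h.
  by rewrite pmulr_lgt0.
have a1 : a < 1 by rewrite /a; lra.
set C := E N / a ^+ N.
have C0 : 0 < C by rewrite divr_gt0 // exprn_gt0.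
have HC : forall k, (N <= k)%N -> E k <= C * a ^+ k.
  apply: indN; first by rewrite /C divfK // gt_eqF // exprn_gt0.
  move=> k hk IH; apply: le_trans (Hr k hk) _.
  by rewrite exprS mulrCA ler_pM2l.
have hq1 : 0 <= 1 - q by lra.
exists (C `^ (1 - q)), (a `^ (1 - q)); split; first by rewrite powR_gt0.
split.
  rewrite powR_gt0 //=.
  have := gt0_ltr_powR (_ : 0 < 1 - q) (_ : a \in Num.nneg) (_ : 1 \in Num.nneg) a1.
  rewrite powR1 !nnegrE; apply => //; [lra | exact: ltW].
move=> k hk.
have [ek0 _ _] := H k hk.
have h1 : E k `^ (1 - q) <= (C * a ^+ k) `^ (1 - q).
  have := ge0_ler_powR hq1 (_ : E k \in Num.nneg) (_ : C * a ^+ k \in Num.nneg) (HC k hk).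
  rewrite !nnegrE; apply; first exact: ltW.
  by rewrite mulr_ge0 ?exprn_ge0 // ltW.
apply: le_trans h1 _.
rewrite powRM ?exprn_ge0 ?(ltW C0) ?(ltW a0) //.
rewrite -(@powR_mulrn _ a k (ltW a0)) powRAC powR_mulrn ?powR_ge0 //.
Qed.

Lemma rate_sub (R : realType) (E : nat -> R) (c2 q : R) (N : nat) :
  0 < c2 -> 1/2 < q -> q < 1 ->
  (forall k, (N <= k)%N -> [/\ 0 < E k, E k < 1 & E k.+1 <= E k - c2 * E k `^ (2 * q)]) ->
  exists vr : R, 0 < vr /\ exists N', forall k, (N' <= k)%N ->
    E k `^ (1 - q) <= vr * (k%:R) `^ (- ((1 - q) / (2 * q - 1))).
Proof.
move=> c0 qh q1 H.
set p := 2 * q - 1.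
have p0 : 0 < p by rewrite /p; lra.
have Hs : forall k, (N <= k)%N -> E k `^ (- p) + p * c2 <= E k.+1 `^ (- p).
  move=> k hk; have [e0 _ er] := H k hk; have [e10 _ _] := H k.+1 (leqW hk).
  have hc := pow_convex p (E k) (E k.+1) p0 e0 e10.
  apply: le_trans hc; rewrite lerD2l -mulrA ler_pM2l //.
  have E0 : E k `^ (- p - 1) * E k `^ (2 * q) = 1.
    rewrite -powRD; last by apply/implyP => _; rewrite gt_eqF.
    by rewrite /p (_ : _ + _ = 0) ?powRr0 //; ring.
  have P0 : 0 < E k `^ (- p - 1) by rewrite powR_gt0.
  have : c2 * E k `^ (2 * q) <= E k - E k.+1 by lra.
  move/(ler_wpM2l (ltW P0)); rewrite mulrCA E0 mulr1 //.
have HN : forall k, (N <= k)%N -> p * c2 * (k - N)%:R <= E k `^ (- p).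
  apply: indN; first by rewrite subnn mulr0 powR_ge0.
  move=> k hk IH; apply: le_trans (Hs k hk).
  by rewrite subSn // mulrS mulrDr mulr1 addrC lerD2r.
set A := p * c2 / 2.
have A0 : 0 < A by rewrite divr_gt0 // mulr_gt0.
set s := (1 - q) / p.
have s0 : 0 < s by rewrite divr_gt0 //; lra.
exists (A `^ (- s)); split; first by rewrite powR_gt0.
exists (2 * N).+1 => k hk.
have k0 : 0 < k%:R :> R by rewrite ltr0n; apply: leq_trans hk.
have kN : (N <= k)%N by lia.
have [ek0 _ _] := H k kN.
have h1 : A * k%:R <= E k `^ (- p).
  apply: le_trans (HN k kN); rewrite /A -mulrA ler_pM2l ?mulr_gt0 // natrB //.
  have : (2 * N <= k)%N by lia.
  rewrite -(ler_nat R) natrM; lra.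
have E1 : E k `^ (1 - q) = (E k `^ (- p)) `^ (- s).
  by rewrite -powRrM /s mulNr mulrN opprK mulrC divfK // gt_eqF.
rewrite E1 -powRM ?(ltW A0) ?(ltW k0) //.
by apply: powR_antiN => //; rewrite mulr_gt0.
Qed.


Section Alg.
Variables (R : realType) (n : nat).
Variables (f : 'rV[R]_n -> R) (gf : 'rV[R]_n -> 'rV[R]_n)
  (mu theta beta gamma tau : R) (rho : nat -> R)
  (x g d : nat -> 'rV[R]_n) (eps r t : nat -> R).
Hypothesis Hdiff : forall x, differentiable f x /\ forall h, 'd f x h = dotv (gf x) h.
Hypothesis He1 : 0 < eps 1%N.
Hypothesis Hr1 : 0 < r 1%N.
Hypothesis Hmu0 : 0 < mu.
Hypothesis Hth0 : 0 < theta.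
Hypothesis Hthmu : theta < mu.
Hypothesis Hb0 : 0 < beta.
Hypothesis Hb1 : beta < 1.
Hypothesis Hg0 : 0 < gamma.
Hypothesis Hg1 : gamma < 1.
Hypothesis Hstep : forall k, (1 <= k)%N ->
        [/\ enorm (g k - gf (x k)) <= Num.min (eps k) (rho k),
            (if enorm (g k) <= r k + eps k then
               [/\ r k.+1 = mu * r k, eps k.+1 = theta * eps k,
                   d k = 0 & t k = tau]
             else
               [/\ r k.+1 = r k, eps k.+1 = eps k,
                   d k = - ((enorm (g k) - eps k) / enorm (g k)) *: g k &
                   exists i : nat,
                     [/\ t k = gamma ^+ i,
                         f (x k + t k *: d k) <= f (x k) - beta * t k * enorm (d k) ^+ 2 &
                         forall i', (i' < i)%N ->
                           ~ (f (x k + gamma ^+ i' *: d k)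
                                <= f (x k) - beta * gamma ^+ i' * enorm (d k) ^+ 2)]])
          & x k.+1 = x k + t k *: d k].

Lemma inv k : (1 <= k)%N -> [/\ 0 < eps k, 0 < r k & eps k * r 1%N <= eps 1%N * r k].
Proof.
move: k; apply: ind1 => [|k k1 [e0 r0 er]]; first by split.
have [_ + _] := Hstep k k1; case: ifP => _ [-> -> _ _]; last by split.
split; rewrite ?mulr_gt0 //.
rewrite -mulrA (mulrCA (eps 1%N)).
apply: le_trans (_ : mu * (eps k * r 1%N) <= _); last by rewrite ler_pM2l.
by rewrite ler_pM2r ?mulr_gt0 // ltW.
Qed.

Definition K := 1 + 2 * (eps 1%N / r 1%N).

Lemma nonnull k : (1 <= k)%N -> x k.+1 != x k ->
  [/\ r k + eps k < enorm (g k), enorm (g k - gf (x k)) <= eps k,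
      d k = - ((enorm (g k) - eps k) / enorm (g k)) *: g k,
      exists i : nat,
        [/\ t k = gamma ^+ i,
            f (x k + t k *: d k) <= f (x k) - beta * t k * enorm (d k) ^+ 2 &
            forall i', (i' < i)%N ->
              ~ (f (x k + gamma ^+ i' *: d k)
                   <= f (x k) - beta * gamma ^+ i' * enorm (d k) ^+ 2)]
      & x k.+1 = x k + t k *: d k].
Proof.
move=> k1 hne; have [h1 + h3] := Hstep k k1.
have hm : enorm (g k - gf (x k)) <= eps k by apply: le_trans h1 _; rewrite ge_min lexx.
case: ifP => hc.
  by move=> [_ _ hd _]; rewrite h3 hd scaler0 addr0 eqxx in hne.
by move=> [_ _ hd hi]; split => //; rewrite ltNge hc.
Qed.

Lemma nn_dnorm k : (1 <= k)%N -> x k.+1 != x k ->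
  enorm (d k) = enorm (g k) - eps k /\ r k < enorm (d k).
Proof.
move=> k1 hne; have [hg _ hd _ _] := nonnull k k1 hne.
have [e0 r0 _] := inv k k1.
have G0 : 0 < enorm (g k) by apply: lt_trans hg; rewrite addr_gt0.
have -> : enorm (d k) = enorm (g k) - eps k.
  rewrite hd enormZ normrN ger0_norm ?divr_ge0 ?(ltW G0) //; last first.
    by rewrite subr_ge0; apply: ltW; apply: lt_trans hg; rewrite ltrDr.
  by rewrite divfK ?gt_eqF.
split => //; lra.
Qed.

Lemma grad_bound k : (1 <= k)%N -> x k.+1 != x k ->
  enorm (gf (x k)) <= K * enorm (d k).
Proof.
move=> k1 hne; have [hg hm _ _ _] := nonnull k k1 hne.
have [hdn _] := nn_dnorm k k1 hne.
have [e0 r0 er] := inv k k1.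
have h1 : enorm (gf (x k)) <= enorm (g k) + eps k.
  have -> : gf (x k) = g k - (g k - gf (x k)) by rewrite opprB addrC subrK.
  by apply: le_trans (enormB _ _) _; rewrite lerD2l.
apply: le_trans h1 _; rewrite hdn /K.
set kap := eps 1%N / r 1%N.
have kap0 : 0 <= kap by rewrite divr_ge0 // ltW.
have ek : eps k <= kap * r k.
  by rewrite /kap mulrAC ler_pdivlMr // mulrC.
nra.
Qed.

Lemma dir_desc k : (1 <= k)%N -> x k.+1 != x k ->
  dotv (gf (x k)) (d k) <= - enorm (d k) ^+ 2.
Proof.
move=> k1 hne; have [hg hm hd _ _] := nonnull k k1 hne.
have [hdn _] := nn_dnorm k k1 hne.
have [e0 r0 _] := inv k k1.
set G := enorm (g k).
have G0 : 0 < G by apply: lt_trans hg; rewrite addr_gt0.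
set c := (G - eps k) / G.
have c0 : 0 <= c by rewrite divr_ge0 ?(ltW G0) // subr_ge0; apply: ltW; apply: lt_trans hg; rewrite ltrDr.
have cG : c * G = G - eps k by rewrite /c divfK ?gt_eqF.
have h1 : dotv (gf (x k)) (g k) >= G ^+ 2 - eps k * G.
  have -> : dotv (gf (x k)) (g k) = dotv (g k) (g k) - dotv (g k - gf (x k)) (g k).
    by rewrite dotvBl opprB addrC subrK.
  rewrite -enorm_sq lerD2l lerN2.
  apply: le_trans (CS _ _) _; rewrite ler_pM2r //.
rewrite hdn hd dotvZr mulNr -/c.
have : c * (G ^+ 2 - eps k * G) <= c * dotv (gf (x k)) (g k) by rewrite ler_wpM2l.
rewrite -/G.
have E : c * (G ^+ 2 - eps k * G) = (G - eps k) ^+ 2 by rewrite [RHS]expr2 -{1}cG; ring.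
lra.
Qed.


Lemma xstep k : (1 <= k)%N -> x k.+1 != x k ->
  exists i : nat, [/\ t k = gamma ^+ i, 0 < t k, 0 < enorm (d k),
    f (x k.+1) <= f (x k) - beta * t k * enorm (d k) ^+ 2 &
    forall i', (i' < i)%N ->
       ~ (f (x k + gamma ^+ i' *: d k)
              <= f (x k) - beta * gamma ^+ i' * enorm (d k) ^+ 2)].
Proof.
move=> k1 hne; have [_ _ _ [i [ti hA hmax]] hx] := nonnull k k1 hne.
have [_ hr] := nn_dnorm k k1 hne.
have [_ r0 _] := inv k k1.
have t0 : 0 < t k by rewrite ti exprn_gt0.
exists i; split => //; first by apply: lt_trans hr.
by rewrite hx.
Qed.

Lemma xnorm k : (1 <= k)%N -> x k.+1 != x k ->
  enorm (x k.+1 - x k) = t k * enorm (d k).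
Proof.
move=> k1 hne; have [_ _ _ _ hx] := nonnull k k1 hne.
have [i [_ t0 _ _ _]] := xstep k k1 hne.
by rewrite hx addrC addKr enormZ ger0_norm // ltW.
Qed.

Lemma fdec k : (1 <= k)%N -> f (x k.+1) <= f (x k).
Proof.
move=> k1; have [->//|hne] := eqVneq (x k.+1) (x k).
have [i [_ t0 _ hA _]] := xstep k k1 hne.
apply: le_trans hA _; rewrite lerBlDr lerDl.
by rewrite mulr_ge0 ?sqr_ge0 // mulr_ge0 // ltW.
Qed.

Lemma fstrict k : (1 <= k)%N -> x k.+1 != x k -> f (x k.+1) < f (x k).
Proof.
move=> k1 hne; have [i [_ t0 d0 hA _]] := xstep k k1 hne.
apply: le_lt_trans hA _; rewrite ltrBlDr ltrDl.
by rewrite mulr_gt0 ?exprn_gt0 // mulr_gt0.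
Qed.

Lemma fmono k m : (1 <= k)%N -> (k <= m)%N -> f (x m) <= f (x k).
Proof.
move=> k1; move: m; apply: indN => // m km h.
apply: le_trans h; apply: fdec; exact: leq_trans km.
Qed.

Variable xbar : 'rV[R]_n.
Hypothesis Hacc : forall e : R, 0 < e -> forall N : nat, exists k : nat,
      (N <= k)%N /\ (1 <= k)%N /\ enorm (x k - xbar) < e.

Lemma fcont : forall e : R, 0 < e -> exists2 dl : R, 0 < dl &
    forall y, enorm (y - xbar) < dl -> `|f xbar - f y| < e.
Proof. apply: cont_enorm; apply: differentiable_continuous; exact: (proj1 (Hdiff _)). Qed.

Lemma fbar_le k : (1 <= k)%N -> f xbar <= f (x k).
Proof.
move=> k1; rewrite leNgt; apply/negP => hlt.
have e0 : 0 < f xbar - f (x k) by rewrite subr_gt0.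
have [dl dl0 hc] := fcont _ e0.
have [m [km [m1 hm]]] := Hacc _ dl0 k.
have h1 := hc _ hm; have h2 := fmono _ _ k1 km.
have h3 := ler_norm (f xbar - f (x m)).
lra.
Qed.

Lemma flim e : 0 < e -> exists N, (1 <= N)%N /\ forall k, (N <= k)%N -> f (x k) - f xbar < e.
Proof.
move=> e0; have [dl dl0 hc] := fcont _ e0.
have [m [_ [m1 hm]]] := Hacc _ dl0 0.
exists m; split => // k km; have h1 := hc _ hm; have h2 := fmono _ _ m1 km.
have h3 := ler_norm (f (x m) - f xbar); rewrite distrC in h1.
lra.
Qed.

Lemma e_pos k : (1 <= k)%N -> x k.+1 != x k -> 0 < f (x k) - f xbar.
Proof.
move=> k1 hne; have := fstrict _ k1 hne; have := fbar_le _ (leqW k1); rewrite subr_gt0; lra.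
Qed.



Variables (dl L : R).
Hypothesis Hdl : 0 < dl.
Hypothesis HL0 : 0 < L.
Hypothesis HLip : forall y z, enorm (y - xbar) < dl -> enorm (z - xbar) < dl ->
  enorm (gf y - gf z) <= L * enorm (y - z).

Definition taum := Num.min 1 (gamma * (1 - beta) / L).

Lemma step_lb k : (1 <= k)%N -> x k.+1 != x k -> enorm (x k - xbar) < dl / 2 ->
  enorm (x k.+1 - x k) <= gamma * dl / 2 -> taum <= t k.
Proof.
move=> k1 hne hx hs.
have [i [ti t0 d0 _ hmax]] := xstep k k1 hne.
have hxn := xnorm k k1 hne.
case: i ti hmax => [|i] ti hmax; first by rewrite ti expr0 /taum ge_min lexx.
set s := gamma ^+ i.
have s0 : 0 < s by rewrite exprn_gt0.
have s1 : s <= 1 by rewrite exprn_ile1 // ltW.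
have ts : t k = gamma * s by rewrite ti exprS.
have hsd : s * enorm (d k) <= dl / 2.
  rewrite hxn ts in hs.
  rewrite -(ler_pM2l Hg0) mulrA; apply: le_trans hs _; rewrite mulrA; lra.
have hfail := hmax i (ltnSn i).
have hdes := descent f gf Hdiff (x k) (d k) s L (ltW s0) (ltW HL0).
have hd2 := dir_desc k k1 hne.
have : f (x k + s *: d k) <= f (x k) + s * dotv (gf (x k)) (d k) + L * s ^+ 2 * enorm (d k) ^+ 2.
  apply: hdes => u /andP [u0 us].
  have -> : u * enorm (d k) = enorm (x k + u *: d k - x k).
    by rewrite addrC addKr enormZ ger0_norm.
  apply: HLip; last first.
  apply: lt_trans hx _; rewrite ltr_pdivrMr // mulr_natr mulr2n ltrDl //.
  have -> : x k + u *: d k - xbar = (x k - xbar) + u *: d k by rewrite addrAC.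
  apply: le_lt_trans (enormD _ _) _; rewrite enormZ ger0_norm //.
  have : u * enorm (d k) <= s * enorm (d k) by rewrite ler_wpM2r ?enorm_ge0.
  lra.
move=> hf.
have hlt : f (x k) - beta * s * enorm (d k) ^+ 2 < f (x k + s *: d k).
  by rewrite ltNge; apply/negP.
set D := enorm (d k) ^+ 2.
have D0 : 0 < D by rewrite exprn_gt0.
have hsd2 : s * dotv (gf (x k)) (d k) <= - s * D.
  by rewrite mulNr -mulrN ler_wpM2l // ltW.
have h1 : (1 - beta) * (s * D) < (L * s) * (s * D).
  rewrite -/D in hf hlt; nra.
have h2 : 1 - beta < L * s by rewrite -(ltr_pM2r (mulr_gt0 s0 D0)).
rewrite ts /taum ge_min; apply/orP; right.
rewrite ler_pdivrMr // -mulrA ler_pM2l // mulrC; exact: ltW.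
Qed.


Variables (M q eta : R).
Hypothesis HM : 0 < M.
Hypothesis Hq0 : 0 < q.
Hypothesis Hq1 : q < 1.
Hypothesis Heta : 0 < eta.
Hypothesis HKL : forall y, enorm (y - xbar) < dl -> f xbar < f y -> f y < f xbar + eta ->
  M * (f y - f xbar) `^ q <= enorm (gf y).

Definition e k := f (x k) - f xbar.
Definition c1 := K / (beta * M * (1 - q)).
Definition Phi (s : R) := c1 * s `^ (1 - q).

Lemma K_ge1 : 1 <= K.
Proof. by rewrite /K lerDl mulr_ge0 // divr_ge0 // ltW. Qed.

Lemma c1_gt0 : 0 < c1.
Proof.
rewrite /c1 divr_gt0 //; first by apply: lt_le_trans K_ge1.
by rewrite !mulr_gt0 // subr_gt0.
Qed.

Lemma e_ge0 k : (1 <= k)%N -> 0 <= e k.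
Proof. by move=> k1; rewrite /e subr_ge0 fbar_le. Qed.

Lemma per_step m : (1 <= m)%N -> x m.+1 != x m -> enorm (x m - xbar) < dl ->
  e m < eta -> enorm (x m.+1 - x m) <= Phi (e m) - Phi (e m.+1).
Proof.
move=> m1 hne hx het.
have em0 : 0 < e m by exact: e_pos.
have em1 : 0 <= e m.+1 by apply: e_ge0.
have [i [_ t0 d0 hA _]] := xstep m m1 hne.
have hxn := xnorm m m1 hne.
have hg := grad_bound m m1 hne.
have hkl : M * e m `^ q <= enorm (gf (x m)).
  apply: HKL => //; first by rewrite -subr_gt0.
  by rewrite -ltrBlDl.
have hq1 : 0 < 1 - q by rewrite subr_gt0.
have hq2 : 1 - q < 1 by rewrite ltrBlDl ltrDr.
have hconc := pow_concave (1 - q) (e m) (e m.+1) (introT andP (conj hq1 hq2)) em0 em1.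
have E1 : 1 - q - 1 = - q by rewrite addrAC subrr add0r.
rewrite E1 powRN in hconc.
set P := e m `^ q in hkl hconc.
have P0 : 0 < P by rewrite powR_gt0.
set D := enorm (d m) in hg hA hxn d0 *.
have h1 : M * P * (t m * D) <= K * (t m * D) * D.
  have : M * P <= K * D by apply: le_trans hkl hg.
  move/(ler_wpM2r (mulr_ge0 (ltW t0) (ltW d0))); lra.
have h2 : beta * (t m * D) * D <= e m - e m.+1 by rewrite /e; lra.
have h3 : t m * D <= K * (e m - e m.+1) / (beta * M * P).
  rewrite ler_pdivlMr ?mulr_gt0 //.
  have := ler_wpM2l (ltW Hb0) h1.
  have := ler_wpM2l (le_trans ler01 K_ge1) h2.
  nra.
rewrite hxn /Phi -mulrBr; apply: le_trans h3 _.
apply: le_trans (ler_wpM2l (ltW c1_gt0) hconc).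
rewrite /c1 le_eqVlt; apply/orP; left; apply/eqP.
field.
by rewrite !gt_eqF ?subr_gt0.
Qed.


Lemma Phi_ge0 a : 0 <= Phi a.
Proof. by rewrite /Phi mulr_ge0 ?powR_ge0 // ltW // c1_gt0. Qed.

Lemma Phi_le a b : 0 <= a -> a <= b -> Phi a <= Phi b.
Proof.
move=> a0 ab; rewrite /Phi ler_wpM2l ?(ltW c1_gt0) //.
have hq : 0 <= 1 - q by rewrite subr_ge0 ltW.
have b0 : 0 <= b by exact: le_trans a0 ab.
have := ge0_ler_powR hq (_ : a \in Num.nneg) (_ : b \in Num.nneg) ab.
by rewrite !nnegrE; apply.
Qed.

Lemma Phi_small w : 0 < w -> exists2 s, 0 < s & forall a, 0 <= a -> a < s -> Phi a < w.
Proof.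
move=> w0.
have hq1 : 0 < 1 - q by rewrite subr_gt0.
set z := w / c1.
have z0 : 0 < z by rewrite divr_gt0 // c1_gt0.
exists (z `^ (1 - q)^-1); first by rewrite powR_gt0.
move=> a a0 az.
have h : a `^ (1 - q) < (z `^ (1 - q)^-1) `^ (1 - q).
  apply: gt0_ltr_powR => //; rewrite nnegrE ?powR_ge0 //.
rewrite -powRrM mulVf ?gt_eqF // powRr1 ?(ltW z0) // in h.
rewrite /Phi mulrC -ltr_pdivlMr ?c1_gt0 //.
Qed.


Lemma choose_k0 : exists k0, [/\ (1 <= k0)%N, enorm (x k0 - xbar) < dl / 4,
  e k0 < eta & Phi (e k0) < gamma * dl / 4].
Proof.
have w0 : 0 < gamma * dl / 4 by rewrite divr_gt0 // mulr_gt0.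
have [s s0 hs] := Phi_small _ w0.
have m0 : 0 < Num.min eta s by rewrite lt_min Heta s0.
have [N [N1 hN]] := flim _ m0.
have d4 : 0 < dl / 4 by rewrite divr_gt0.
have [k0 [Nk [k1 hk]]] := Hacc _ d4 N.
have h := hN _ Nk; rewrite lt_min in h; have /andP [h1 h2] := h.
by exists k0; split => //; apply: hs => //; apply: e_ge0.
Qed.

Variable j : nat -> nat.
Hypothesis Hj1 : forall k, (1 <= k)%N -> (j k < j k.+1)%N.
Hypothesis Hj2 : forall m, (1 <= m)%N -> (x m.+1 <> x m <-> exists k, (1 <= k)%N /\ j k = m).
Hypothesis Hj3 : forall k, (1 <= k)%N -> (1 <= j k)%N /\ x (j k).+1 <> x (j k).
Hypothesis Heta1 : eta <= 1.

Section K0.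
Variable k0 : nat.
Hypothesis Hk01 : (1 <= k0)%N.
Hypothesis Hk0x : enorm (x k0 - xbar) < dl / 4.
Hypothesis Hk0e : e k0 < eta.
Hypothesis Hk0P : Phi (e k0) < gamma * dl / 4.

Lemma e_mono m p : (1 <= m)%N -> (m <= p)%N -> e p <= e m.
Proof. by move=> m1 mp; rewrite /e lerD2r; apply: fmono. Qed.

Lemma trap m : (k0 <= m)%N -> enorm (x m - x k0) + Phi (e m) <= Phi (e k0).
Proof.
move: m; apply: indN; first by rewrite subrr enorm0 add0r.
move=> m km IH.
have m1 : (1 <= m)%N by apply: leq_trans km.
have hin : enorm (x m - xbar) < dl.
  have -> : x m - xbar = (x m - x k0) + (x k0 - xbar) by rewrite addrA subrK.
  apply: le_lt_trans (enormD _ _) _.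
  have := Phi_ge0 (e m); have : gamma * dl <= dl by rewrite ler_piMl // ltW.
  have := Hk0P; have := Hk0x; have := Hdl; lra.
have het : e m < eta by apply: le_lt_trans (e_mono _ _ Hk01 km) Hk0e.
have [heq|hne] := eqVneq (x m.+1) (x m).
  by rewrite /e heq.
have hs := per_step m m1 hne hin het.
have -> : x m.+1 - x k0 = (x m.+1 - x m) + (x m - x k0) by rewrite addrA subrK.
apply: le_trans (lerD (enormD _ _) (lexx _)) _.
lra.
Qed.


Lemma in_ball m : (k0 <= m)%N -> enorm (x m - xbar) < dl / 2.
Proof.
move=> km; have IH := trap m km.
have -> : x m - xbar = (x m - x k0) + (x k0 - xbar) by rewrite addrA subrK.
apply: le_lt_trans (enormD _ _) _.
have := Phi_ge0 (e m); have : gamma * dl <= dl by rewrite ler_piMl // ltW.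
have := Hk0P; have := Hk0x; have := Hdl; lra.
Qed.

Lemma step_ineq m : (k0 <= m)%N -> enorm (x m.+1 - x m) <= Phi (e m) - Phi (e m.+1).
Proof.
move=> km; have m1 : (1 <= m)%N by apply: leq_trans km.
have [heq|hne] := eqVneq (x m.+1) (x m).
  by rewrite /e heq !subrr enorm0.
apply: per_step => //.
  by apply: lt_trans (in_ball m km) _; have := Hdl; lra.
by apply: le_lt_trans (e_mono _ _ Hk01 km) Hk0e.
Qed.

Lemma tele m p : (k0 <= m)%N -> (m <= p)%N -> enorm (x p - x m) <= Phi (e m) - Phi (e p).
Proof.
move=> km; move: p; apply: indN; first by rewrite !subrr enorm0.
move=> p mp IH.
have := step_ineq p (leq_trans km mp).
have -> : x p.+1 - x m = (x p.+1 - x p) + (x p - x m) by rewrite addrA subrK.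
move=> h; apply: le_trans (enormD _ _) _; lra.
Qed.

Lemma dist m : (k0 <= m)%N -> enorm (x m - xbar) <= Phi (e m).
Proof.
move=> km; apply/ler_addgt0Pr => eps0 heps.
have [p [mp [_ hp]]] := Hacc _ heps m.
have h := tele m p km mp.
have -> : x m - xbar = (x p - xbar) - (x p - x m) by rewrite opprB [RHS]addrC [RHS]addrA subrK.
apply: le_trans (enormB _ _) _.
have := Phi_ge0 (e p); lra.
Qed.

Definition c2 := beta * taum * (M / K) ^+ 2.

Lemma taum_gt0 : 0 < taum.
Proof. by rewrite /taum lt_min ltr01 /= divr_gt0 // mulr_gt0 // subr_gt0. Qed.

Lemma c2_gt0 : 0 < c2.
Proof.
rewrite /c2 mulr_gt0 ?exprn_gt0 ?divr_gt0 // ?mulr_gt0 // ?taum_gt0 //.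
by apply: lt_le_trans K_ge1.
Qed.

Lemma suff_dec m : (k0 <= m)%N -> x m.+1 != x m ->
  c2 * e m `^ (2 * q) <= e m - e m.+1.
Proof.
move=> km hne; have m1 : (1 <= m)%N by apply: leq_trans km.
have hin := in_ball m km.
have hs := step_ineq m km.
have htau : taum <= t m.
  apply: step_lb => //.
  apply: le_trans hs _.
  have := Phi_ge0 (e m.+1); have := Phi_le _ _ (e_ge0 _ m1) (e_mono _ _ Hk01 km).
  have := Hk0P; have := Hdl; have := Hg0; nra.
have [i [_ t0 d0 hA _]] := xstep m m1 hne.
have hg := grad_bound m m1 hne.
have em0 : 0 < e m by exact: e_pos.
have het : e m < eta by apply: le_lt_trans (e_mono _ _ Hk01 km) Hk0e.
have hkl : M * e m `^ q <= enorm (gf (x m)).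
  apply: HKL => //; first by apply: lt_trans hin _; have := Hdl; lra.
    by rewrite -subr_gt0.
  by rewrite -ltrBlDl.
have E2 : e m `^ (2 * q) = (e m `^ q) ^+ 2.
  by rewrite mulrC powRrM powR_mulrn // powR_ge0.
rewrite E2.
set P := e m `^ q in hkl *.
set D := enorm (d m) in hA hg d0 *.
have K0 : 0 < K by apply: lt_le_trans K_ge1.
have hP : M / K * P <= D.
  by rewrite mulrAC ler_pdivrMr // [D * K]mulrC; apply: le_trans hkl hg.
have P0 : 0 <= P by exact: powR_ge0.
have hP2 : (M / K * P) ^+ 2 <= D ^+ 2.
  by rewrite ler_pXn2r // nnegrE ?(ltW d0) // mulr_ge0 // divr_ge0 // ltW.
have h1 : beta * taum * D ^+ 2 <= beta * t m * D ^+ 2.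
  by rewrite ler_wpM2r ?sqr_ge0 // ler_wpM2l // ltW.
have h2 : c2 * P ^+ 2 <= beta * taum * D ^+ 2.
  rewrite /c2 -mulrA ler_wpM2l ?mulr_ge0 ?(ltW taum_gt0) ?(ltW Hb0) //.
  by rewrite -exprMn.
rewrite /e; have := hA; rewrite -/(e m) -/(e m.+1) /e; lra.
Qed.




Lemma j_mono a b : (1 <= a)%N -> (a <= b)%N -> (j a <= j b)%N.
Proof.
move=> a1; move: b; apply: indN => // b ab h.
apply: leq_trans h (ltnW (Hj1 _ (leq_trans a1 ab))).
Qed.

Lemma j_ge k : (1 <= k)%N -> (k <= j k)%N.
Proof.
move: k; apply: ind1; first by case: (Hj3 _ (leqnn 1)).
by move=> k k1 h; apply: leq_ltn_trans h (Hj1 _ k1).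
Qed.

Lemma j_next k : (1 <= k)%N -> x (j k.+1) = x (j k).+1.
Proof.
move=> k1.
have H : forall i, ((j k).+1 + i <= j k.+1)%N -> x ((j k).+1 + i) = x (j k).+1.
  elim=> [|i IH] hi; first by rewrite addn0.
  rewrite addnS -IH; last by apply: ltnW; rewrite -addnS.
  set m := ((j k).+1 + i)%N.
  apply/eqP; rewrite -[_ == _]negbK; apply/negP => /eqP hne.
  have m1 : (1 <= m)%N by rewrite /m addSn.
  have [l [l1 hl]] := (proj1 (Hj2 m m1)) hne.
  have h1 : (j k < j l)%N by rewrite hl /m addSn ltnS leq_addr.
  have h2 : (j l < j k.+1)%N by rewrite hl /m -addnS.
  have [lk|kl] := leqP l k.
    by have := j_mono _ _ l1 lk; rewrite leqNgt h1.
  by have := j_mono _ _ (leq_trans k1 (leqnSn k)) kl; rewrite leqNgt h2.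
have := H ((j k.+1) - (j k).+1)%N; rewrite subnKC //; last exact: Hj1.
by apply.
Qed.

Definition E k := e (j k).

Lemma E_props k : (k0 <= k)%N ->
  [/\ 0 < E k, E k < 1, E k.+1 <= E k - c2 * E k `^ (2 * q) &
      enorm (x (j k) - xbar) <= Phi (E k)].
Proof.
move=> kk.
have k1 : (1 <= k)%N by apply: leq_trans kk.
have jk : (k0 <= j k)%N by apply: leq_trans kk (j_ge _ k1).
have [jk1 hne] := Hj3 _ k1.
have hne' : x (j k).+1 != x (j k) by apply/eqP.
split.
- exact: e_pos.
- apply: le_lt_trans (e_mono _ _ Hk01 jk) _; apply: lt_le_trans Hk0e Heta1.
- rewrite /E /e j_next //; have := suff_dec _ jk hne'; rewrite /e; lra.
- exact: dist.
Qed.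

End K0.

Lemma final :
  (q <= 1/2 ->
     exists C lam : R, 0 < C /\ 0 < lam < 1 /\
       \forall k \near \oo, enorm (x (j k) - xbar) <= C * lam ^+ k)
  /\
  (1/2 < q ->
     exists vr : R, 0 < vr /\
       \forall k \near \oo,
         enorm (x (j k) - xbar) <= vr * (k%:R) `^ (- ((1 - q) / (2 * q - 1)))).
Proof.
have [k0 [h1 h2 h3 h4]] := choose_k0.
have HE := E_props k0 h1 h2 h3 h4.
have HE' : forall k, (k0 <= k)%N -> [/\ 0 < E k, E k < 1 & E k.+1 <= E k - c2 * E k `^ (2 * q)].
  by move=> k hk; have [] := HE k hk.
have c10 := c1_gt0.
split => hq.
- have [C [lam [C0 [hl hC]]]] := rate_lin _ _ _ _ _ c2_gt0 Hq0 hq HE'.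
  exists (c1 * C), lam; split; first by rewrite mulr_gt0.
  split => //; apply: (near_oo _ k0) => k hk.
  have [_ _ _ hd] := HE k hk; apply: le_trans hd _.
  by rewrite /Phi -mulrA ler_wpM2l ?(ltW c10) // hC.
- have [vr [vr0 [N' hN]]] := rate_sub _ _ _ _ _ c2_gt0 hq Hq1 HE'.
  exists (c1 * vr); split; first by rewrite mulr_gt0.
  apply: (near_oo _ (maxn k0 N')) => k hk.
  have hk0 : (k0 <= k)%N by apply: leq_trans hk; rewrite leq_maxl.
  have hkN : (N' <= k)%N by apply: leq_trans hk; rewrite leq_maxr.
  have [_ _ _ hd] := HE k hk0; apply: le_trans hd _.
  by rewrite /Phi -mulrA ler_wpM2l ?(ltW c10) // hN.
Qed.
End Alg.



Theorem mainTheorem16 (R : realType) (n : nat)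
  (f : 'rV[R]_n -> R) (gf : 'rV[R]_n -> 'rV[R]_n)
  (mu theta beta gamma tau : R) (rho : nat -> R)
  (x g d : nat -> 'rV[R]_n) (eps r t : nat -> R)
  (xbar : 'rV[R]_n) (M q : R) (j : nat -> nat) :
  C1_with_gradient f gf ->
  IRG_backtracking f gf mu theta beta gamma tau rho x g d eps r t ->
  theta < mu ->
  rho k @[k --> \oo] --> (0 : R) ->
  (* xbar is an accumulation point of (x^k)_{k >= 1} *)
  (forall e : R, 0 < e -> forall N : nat, exists k : nat,
      (N <= k)%N /\ (1 <= k)%N /\ enorm (x k - xbar) < e) ->
  (* KL property at xbar with psi(t) = M t^q *)
  0 < M -> 0 < q < 1 ->
  (exists eta : R, 0 < eta /\ exists U : set 'rV[R]_n, nbhs xbar U /\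
     forall y, U y -> f xbar < f y -> f y < f xbar + eta ->
       M * (f y - f xbar) `^ q <= enorm (gf y)) ->
  (* gradient Lipschitz continuous on a neighborhood of xbar *)
  (exists U : set 'rV[R]_n, nbhs xbar U /\ exists L : R,
     forall y z, U y -> U z -> enorm (gf y - gf z) <= L * enorm (y - z)) ->
  (* j_1 < j_2 < ... enumerates the non-null iterations {k >= 1 : x^{k+1} <> x^k} *)
  (forall k, (1 <= k)%N -> (j k < j k.+1)%N) ->
  (forall m, (1 <= m)%N -> (x m.+1 <> x m <-> exists k, (1 <= k)%N /\ j k = m)) ->
  (forall k, (1 <= k)%N -> (1 <= j k)%N /\ x (j k).+1 <> x (j k)) ->
  (q <= 1/2 ->
     exists C lam : R, 0 < C /\ 0 < lam < 1 /\
       \forall k \near \oo, enorm (x (j k) - xbar) <= C * lam ^+ k)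
  /\
  (1/2 < q ->
     exists vr : R, 0 < vr /\
       \forall k \near \oo,
         enorm (x (j k) - xbar) <= vr * (k%:R) `^ (- ((1 - q) / (2 * q - 1)))).
Proof.
move=> [Hdiff _] [/andP[e1 r1] /andP[/andP[mu0 mu1] /andP[th0 th1]]
  /and3P[/andP[b0 b1] /andP[g0 g1] _] _ Hstep] Hthmu _ Hacc HM /andP[q0 q1]
  [eta [eta0 [U [hU hKL]]]] [V [hV [L0 hL]]] Hj1 Hj2 Hj3.
have [d1 d10 hd1] := nbhs_enorm xbar U hU.
have [d2 d20 hd2] := nbhs_enorm xbar V hV.
set dl := Num.min d1 d2.
have dl0 : 0 < dl by rewrite lt_min d10 d20.
have dl1 : dl <= d1 by rewrite ge_min lexx.
have dl2 : dl <= d2 by rewrite ge_min lexx orbT.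
set L := Num.max L0 1.
have L0' : 0 < L by rewrite lt_max ltr01 orbT.
have HLip : forall y z, enorm (y - xbar) < dl -> enorm (z - xbar) < dl ->
    enorm (gf y - gf z) <= L * enorm (y - z).
  move=> y z hy hz; apply: le_trans (hL y z _ _) _.
  - by apply: hd2; apply: lt_le_trans hy dl2.
  - by apply: hd2; apply: lt_le_trans hz dl2.
  - by rewrite ler_wpM2r ?enorm_ge0 // le_max lexx.
set eta' := Num.min eta 1.
have eta'0 : 0 < eta' by rewrite lt_min eta0 ltr01.
have eta'1 : eta' <= 1 by rewrite ge_min lexx orbT.
have HKL' : forall y, enorm (y - xbar) < dl -> f xbar < f y -> f y < f xbar + eta' ->
    M * (f y - f xbar) `^ q <= enorm (gf y).
  move=> y hy h1 h2; apply: hKL => //.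
    by apply: hd1; apply: lt_le_trans hy dl1.
  by apply: lt_le_trans h2 _; rewrite lerD2l ge_min lexx.
exact: (final R n f gf mu theta beta gamma tau rho x g d eps r t Hdiff e1 r1 mu0 th0
  Hthmu b0 b1 g0 g1 Hstep xbar Hacc dl L dl0 L0' HLip M q eta' HM q0 q1 eta'0 HKL'
  j Hj1 Hj2 Hj3 eta'1).
Qed.
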